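(* Let $X$ be a simplicial set and let $S\subseteq X^\sharp$ be any set of non-degenerate simplices. Then there is a canonical simplicial map $\bigsqcup_{s\in S}\Delta[m_s]\to DX$ such that the square with top map $\sqcup_{s\in S}\rho_s:\bigsqcup_{s\in S}\Delta[n_s]\to\bigsqcup_{s\in S}\Delta[m_s]$, left map $(\bar s)_{s\in S}:\bigsqcup_{s\in S}\Delta[n_s]\to X$, and bottom map $\eta_X:X\to DX$ commutes. Equivalently, for each non-degenerate $x$, the composite $\eta_X\circ\bar x:\Delta[n_x]\to DX$ factors through $\rho_x:\Delta[n_x]\to\Delta[m_x]$.
   Context: Simplicial operators act on the right; $\bar x:\Delta[n]\to X$ is the representing map of an $n$-simplex $x$; $X^\sharp$ is the set of non-degenerate simplices and $n_x$ the degree of $x$; $\varepsilon_i:[0]\to[n]$ is $0\mapsto i$. A simplicial set is non-singular if every non-degenerate simplex has degreewise injective representing map. The desingularization $DX$ is the image of $X\to\prod_f Y$, $x\mapsto(f(x))_f$, over all quotient maps $f:X\to Y$ (maps $X\to X/R$ for operator-compatible families of equivalence relations) with $Y$ non-singular; $\eta_X:X\to DX$ is the corestriction. Enforcer: for $x\in X^\sharp$ of degree $n$, let $i\sim j$ iff $x\varepsilon_i=x\varepsilon_j$, $i\approx k$ iff some $j$ has $i\le k\le j$ and $i\sim j$, and $\simeq$ the equivalence relation generated by $\approx$; its classes are intervals, and $\rho_x:[n]\to[m_x]$ is the order-preserving surjection onto the ordered quotient $\{0,\dots,n\}/\simeq\cong[m_x]$ (also viewed as a map $\Delta[n]\to\Delta[m_x]$).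 *)

(* Defs.v *)
From Stdlib Require Import Relations ClassicalEpsilon.
From mathcomp Require Import all_boot.
Unset Printing Implicit Defensive.

(* Order-preserving maps [m] -> [n], where [m] = {0,...,m} = 'I_m.+1. *)
Record ordmap (m n : nat) := OMap {
  ofun :> 'I_m.+1 -> 'I_n.+1 ;
  omono : forall i j : 'I_m.+1, i <= j -> ofun i <= ofun j }.
Arguments ofun {m n} o _.
Arguments omono {m n} o {i j} _.

Definition oid (n : nat) : ordmap n n := @OMap n n id (fun i j h => h).

Definition ocomp {m n p} (g : ordmap n p) (f : ordmap m n) : ordmap m p :=
  @OMap m p (fun i => g (f i)) (fun i j h => omono g (omono f h)).

Definition eps {n : nat} (i : 'I_n.+1) : ordmap 0 n :=
  @OMap 0 n (fun _ => i) (fun _ _ _ => leqnn i).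

Record sset := SSet {
  sx :> nat -> Type ;
  sact : forall m n, ordmap m n -> sx n -> sx m }.
Arguments sact {s m n}.

(* The simplicial identities (functoriality), maps compared extensionally. *)
Definition is_sset (X : sset) : Prop :=
  (forall n (x : X n), sact (oid n) x = x) /\
  (forall m n p (f : ordmap m n) (g : ordmap n p) (x : X p),
      sact (ocomp g f) x = sact f (sact g x)) /\
  (forall m n (f g : ordmap m n), (forall i, f i = g i) ->
      forall x : X n, sact f x = sact g x).

Record smap (X Y : sset) := SMap {
  smfun :> forall n, X n -> Y n ;
  smnat : forall m n (f : ordmap m n) (x : X n),
      smfun m (sact f x) = sact f (smfun n x) }.
Arguments smfun {X Y} s n _.
Arguments smnat {X Y} s {m n} f x.

Definition Delta (n : nat) : sset :=
  @SSet (fun k => ordmap k n) (fun k l f g => ocomp g f).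

Definition degenerate {X : sset} {n} (x : X n) : Prop :=
  exists m, m < n /\ exists (s : ordmap n m) (z : X m),
    (forall j, exists i, s i = j) /\ x = sact s z.

(* non-singular: every non-degenerate simplex y has a degreewise
   injective representing map ybar : Delta[n] -> Y, ybar_k(f) = y f *)
Definition nonsingular (Y : sset) : Prop :=
  forall n (y : Y n), ~ degenerate y ->
    forall k (f g : ordmap k n), sact f y = sact g y -> forall i, f i = g i.

Record crel (X : sset) := CRel {
  rel :> forall n, X n -> X n -> Prop ;
  rel_refl : forall n x, rel n x x ;
  rel_sym : forall n x y, rel n x y -> rel n y x ;
  rel_trans : forall n x y z, rel n x y -> rel n y z -> rel n x z ;
  rel_compat : forall m n (f : ordmap m n) x y,
      rel n x y -> rel m (sact f x) (sact f y) }.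
Arguments rel {X} c n _ _.

Definition qcar {X : sset} (R : crel X) (n : nat) : Type :=
  {P : X n -> Prop | exists x, P = rel R n x}.

Definition cls {X : sset} (R : crel X) {n} (x : X n) : qcar R n :=
  exist _ (rel R n x) (ex_intro _ x erefl).

Definition qrep {X : sset} {R : crel X} {n} (p : qcar R n) : X n :=
  proj1_sig (constructive_indefinite_description _ (proj2_sig p)).

Definition quot {X : sset} (R : crel X) : sset :=
  @SSet (qcar R) (fun m n f p => cls R (sact f (qrep p))).

Definition NSIndex (X : sset) : Type := {R : crel X | nonsingular (quot R)}.

(* DX = image of X -> prod_{R} X/R, x |-> (class of x)_R *)
Definition Dcar (X : sset) (n : nat) : Type :=
  {p : forall I : NSIndex X, qcar (proj1_sig I) n |
     exists x : X n, p = fun I => cls (proj1_sig I) x}.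

Definition etaX {X : sset} {n} (x : X n) : Dcar X n :=
  exist _ (fun I => cls (proj1_sig I) x) (ex_intro _ x erefl).

Definition Drep {X : sset} {n} (p : Dcar X n) : X n :=
  proj1_sig (constructive_indefinite_description _ (proj2_sig p)).

Definition DX (X : sset) : sset :=
  @SSet (Dcar X) (fun m n f p => etaX (sact f (Drep p))).

Definition vsim {X : sset} {n} (x : X n) (i j : 'I_n.+1) : Prop :=
  sact (eps i) x = sact (eps j) x.

Definition vapprox {X : sset} {n} (x : X n) (i k : 'I_n.+1) : Prop :=
  exists j : 'I_n.+1, i <= k <= j /\ vsim x i j.

Definition enf_equiv {X : sset} {n} (x : X n) : relation 'I_n.+1 :=
  clos_refl_sym_trans _ (vapprox x).

(* Main.v *)
Require Import Defs.
From Stdlib Require Import Relations ClassicalEpsilon.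
From mathcomp Require Import all_boot.
From Stdlib Require Import ProofIrrelevance FunctionalExtensionality PropExtensionality Classical.

Lemma sig_eq (A : Type) (P : A -> Prop) (a b : {x : A | P x}) :
  proj1_sig a = proj1_sig b -> a = b.
Proof.
case: a => a Ha; case: b => b Hb /= E; subst b.
by rewrite (proof_irrelevance _ Ha Hb).
Qed.

Arguments rel_trans {X} c {n x y z} _ _.
Arguments rel_sym {X} c {n x y} _.
Arguments rel_refl {X} c {n} x.
Arguments rel_compat {X} c {m n} f {x y} _.

Section Q.
Variable X : sset.
Variable R : crel X.

Lemma cls_eq n (y y' : X n) : Defs.rel R n y y' -> cls R y = cls R y'.
Proof.
move=> H; apply: sig_eq => /=.
apply: functional_extensionality => w; apply: propositional_extensionality; split => Hw.
- exact: (rel_trans R (rel_sym R H) Hw).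
- exact: (rel_trans R H Hw).
Qed.

Lemma cls_rel n (y y' : X n) : cls R y = cls R y' -> Defs.rel R n y y'.
Proof.
move=> /(f_equal (@proj1_sig _ _)) /= E. rewrite E. exact: (rel_refl R y').
Qed.

Lemma qrep_rel n (y : X n) : Defs.rel R n (qrep (cls R y)) y.
Proof.
rewrite /qrep; case: (constructive_indefinite_description _ _) => w /= E.
have : Defs.rel R n y y := rel_refl R y. by rewrite E.
Qed.

Lemma cls_qrep n (p : qcar R n) : cls R (qrep p) = p.
Proof.
case: p => P HP; rewrite /qrep /=; case: (constructive_indefinite_description _ _) => w /= E.
by apply: sig_eq => /=; rewrite E.
Qed.

Lemma qact n k (f : ordmap k n) (y : X n) :
  @sact (quot R) _ _ f (cls R y) = cls R (sact f y).
Proof. apply: cls_eq; apply: rel_compat; exact: qrep_rel. Qed.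

Hypothesis HX : is_sset X.

Lemma qcomp k l n (f : ordmap k l) (g : ordmap l n) (p : quot R n) :
  sact (ocomp g f) p = sact f (sact g p).
Proof.
case: HX => _ [Hc _]. rewrite -(cls_qrep _ p) !qact Hc. by [].
Qed.

Lemma qid n (p : quot R n) : sact (oid n) p = p.
Proof.
case: HX => Hi _. by rewrite -(cls_qrep _ p) qact Hi.
Qed.

Lemma qext k n (f g : ordmap k n) : (forall i, f i = g i) ->
  forall p : quot R n, sact f p = sact g p.
Proof.
case: HX => _ [_ He] hfg p. by rewrite -(cls_qrep _ p) !qact (He _ _ f g hfg).
Qed.

End Q.

Lemma ez (Y : sset) (Hc : forall k l n (f : ordmap k l) (g : ordmap l n) (p : Y n),
   sact (ocomp g f) p = sact f (sact g p))
 n (y : Y n) : forall N p (s : ordmap n p) (z : Y p), p < N ->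
  (forall j, exists i, s i = j) -> y = sact s z ->
 exists q (s' : ordmap n q) (z' : Y q),
   (forall j, exists i, s' i = j) /\ ~ degenerate z' /\ y = sact s' z'.
Proof.
elim=> [//|N IH] p s z hp hs hy.
case: (classic (degenerate z)) => [[q [hq [t [w [ht hz]]]]]|hnd]; last by exists p, s, z.
apply: (IH q (ocomp t s) w).
- rewrite ltnS in hp; exact: leq_trans hq hp.
- move=> j; case: (ht j) => i <-; case: (hs i) => i' <-; by exists i'.
- by rewrite Hc -hz.
Qed.

Lemma min_pre n m (rho : ordmap n m) (j : 'I_m.+1) : (exists i, rho i = j) ->
  exists i, rho i = j /\ forall i', rho i' = j -> i <= i'.
Proof.
case=> i0 h0.
have h0' : i0 \in [pred i | rho i == j] by rewrite inE; apply/eqP.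
case: (@arg_minnP _ i0 [pred i | rho i == j] (fun i : 'I_n.+1 => nat_of_ord i) h0') => i; rewrite inE => /eqP hi hmin.
exists i; split=> // i' hi'; apply: hmin; rewrite inE; exact/eqP.
Qed.

Lemma Drep_eta (X : sset) k n (f : ordmap k n) (y : X n) :
  etaX (sact f (Drep (etaX y))) = etaX (sact f y).
Proof.
apply: sig_eq => /=; apply: functional_extensionality_dep => I.
apply: cls_eq; apply: rel_compat.
rewrite /Drep; case: (constructive_indefinite_description _ _) => w /= E.
apply: rel_sym; apply: cls_rel; exact: (f_equal (fun F => F I) E).
Qed.

Theorem mainTheorem5 (X : sset) (HX : is_sset X) (n : nat) (x : X n)
  (Hx : ~ degenerate x)
  (m : nat) (rho : ordmap n m)
  (rho_surj : forall j : 'I_m.+1, exists i, rho i = j)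
  (rho_ker : forall i j : 'I_n.+1, rho i = rho j <-> enf_equiv x i j) :
  exists g : smap (Delta m) (DX X),
    forall k (f : ordmap k n),
      g k (ocomp rho f) = etaX (sact f x).
Proof.
have HX' := HX; case: HX' => Hid [Hcomp Hext].
have hS : forall j, {i | rho i = j /\ forall i', rho i' = j -> i <= i'}.
  move=> j; apply: constructive_indefinite_description; exact: min_pre.
pose S0 j := proj1_sig (hS j).
have hSp : forall j, rho (S0 j) = j /\ forall i', rho i' = j -> S0 j <= i'.
  move=> j; exact: (proj2_sig (hS j)).
have S0mono : forall j j' : 'I_m.+1, j <= j' -> S0 j <= S0 j'.
  move=> j j' hjj'; rewrite leqNgt; apply/negP => hlt.
  have e1 := (hSp j).1; have e2 := (hSp j').1.
  have := omono rho (ltnW hlt); rewrite e1 e2 => hj'j.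
  have ejj : j = j' by apply: val_inj; apply/eqP; rewrite eqn_leq hjj' hj'j.
  by move: hlt; rewrite ejj ltnn.
pose S : ordmap m n := @OMap m n S0 S0mono.
have nat_g : forall l k (f : ordmap l k) (h : Delta m k),
  (fun k (h : ordmap k m) => etaX (sact (ocomp S h) x) : DX X k) l (sact f h) =
  sact f ((fun k (h : ordmap k m) => etaX (sact (ocomp S h) x) : DX X k) k h).
  move=> l k f h /=; rewrite Drep_eta; congr etaX.
  rewrite -Hcomp; apply: Hext => i //.
exists (@SMap (Delta m) (DX X) (fun k (h : ordmap k m) => etaX (sact (ocomp S h) x) : DX X k) nat_g).
move=> k f /=.
apply: sig_eq => /=; apply: functional_extensionality_dep => -[R NS] /=.
pose y := cls R x.
have [q [sg [z [hs [hnd hy]]]]] :=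
  @ez (quot R) (@qcomp X R HX) n y n.+1 n (oid n) y (ltnSn n)
     (fun j => ex_intro _ j erefl) (esym (@qid X R HX n y)).
have key : forall i i', enf_equiv x i i' -> sg i = sg i'.
  move=> i i'; elim=> {i i'}.
  - move=> i k' [j [/andP [hik hkj] hv]].
    have eij : sg i = sg j.
      have := NS q z hnd 0 (ocomp sg (eps i)) (ocomp sg (eps j)).
      rewrite !(qcomp X R HX) -hy /y !(qact X R); rewrite /vsim in hv; rewrite hv.
      by move=> /(_ erefl ord0).
    have h1 := omono sg hik; have h2 := omono sg hkj.
    apply: val_inj; apply/eqP; rewrite eqn_leq h1 /=.
    by rewrite eij in h2 *.
  - by [].
  - by move=> ? ? _ ->.
  - by move=> ? ? ? _ -> _ ->.
have e1 : sact (ocomp S (ocomp rho f)) x = sact f (sact (ocomp S rho) x).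
  rewrite -Hcomp; apply: Hext => i //.
rewrite e1 -(qact X R) -(qact X R) -/y hy -!(qcomp X R HX).
rewrite -(qact X R) -/y hy -(qcomp X R HX).
apply: (qext X R HX) => i /=.
apply: key; apply/rho_ker; exact: (hSp _).1.
Qed.
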